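(* Let $X\neq\emptyset$ be a set and let $\Phi$ be a nonempty set of bounded functions $X\to\mathbb{R}$. Let $\tau_{D_X}$ be the topology on $X$ induced by the extended pseudo-metric $D_X$, and let $\tau_{\mathrm{in}}$ be the initial topology on $X$ with respect to $\Phi$ (the coarsest topology making every $\varphi\in\Phi$ continuous, $\mathbb{R}$ carrying the Euclidean topology). Then $\tau_{D_X}$ is finer than $\tau_{\mathrm{in}}$. Moreover, if $\Phi$ is totally bounded with respect to $D_\Phi$, then $\tau_{D_X}=\tau_{\mathrm{in}}$.
   Context: $D_\Phi(\varphi_1,\varphi_2):=\|\varphi_1-\varphi_2\|_\infty=\sup_{x\in X}|\varphi_1(x)-\varphi_2(x)|$ for $\varphi_1,\varphi_2\in\Phi$. The extended pseudo-metric $D_X$ on $X$ is $D_X(x_1,x_2):=\sup_{\varphi\in\Phi}|\varphi(x_1)-\varphi(x_2)|$; its topology $\tau_{D_X}$ has as a base the balls $B_X(x,\varepsilon)=\{x'\in X: D_X(x,x')<\varepsilon\}$, $x\in X$, $\varepsilon>0$. *)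

(* Defs.v *)
From Stdlib Require Import Reals List.
Open Scope R_scope.

(* D_X(x1,x2) < eps, where D_X(x1,x2) = sup_{phi in Phi} |phi x1 - phi x2| (possibly +oo):
   unfolded as "the sup is some real strictly below eps". *)
Definition DX_lt {X : Type} (Phi : (X -> R) -> Prop) (x1 x2 : X) (eps : R) : Prop :=
  exists d, d < eps /\ forall phi, Phi phi -> Rabs (phi x1 - phi x2) <= d.

Definition ball_X {X : Type} (Phi : (X -> R) -> Prop) (x : X) (eps : R) : X -> Prop :=
  fun x' => DX_lt Phi x x' eps.

Definition DX_open {X : Type} (Phi : (X -> R) -> Prop) (U : X -> Prop) : Prop :=
  forall x, U x -> exists eps, 0 < eps /\ forall x', ball_X Phi x eps x' -> U x'.

Definition DPhi_lt {X : Type} (phi1 phi2 : X -> R) (eps : R) : Prop :=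
  exists d, d < eps /\ forall x, Rabs (phi1 x - phi2 x) <= d.

Definition totally_bounded_DPhi {X : Type} (Phi : (X -> R) -> Prop) : Prop :=
  forall eps, 0 < eps ->
    exists l : list (X -> R),
      (forall psi, In psi l -> Phi psi) /\
      (forall phi, Phi phi -> exists psi, In psi l /\ DPhi_lt phi psi eps).

Definition bounded_fun {X : Type} (f : X -> R) : Prop :=
  exists M, forall x, Rabs (f x) <= M.

Definition R_open (V : R -> Prop) : Prop :=
  forall y, V y -> exists e, 0 < e /\ forall z, Rabs (z - y) < e -> V z.

(* T is a topology on X (sets as predicates, T required to respect extensional equality). *)
Definition is_topology {X : Type} (T : (X -> Prop) -> Prop) : Prop :=
  (forall A B : X -> Prop, (forall x, A x <-> B x) -> T A -> T B) /\
  T (fun _ => True) /\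
  (forall A B, T A -> T B -> T (fun x => A x /\ B x)) /\
  (forall S : (X -> Prop) -> Prop, (forall A, S A -> T A) ->
     T (fun x => exists A, S A /\ A x)).

Definition init_open {X : Type} (Phi : (X -> R) -> Prop) (U : X -> Prop) : Prop :=
  forall T : (X -> Prop) -> Prop, is_topology T ->
    (forall phi V, Phi phi -> R_open V -> T (fun x => V (phi x))) -> T U.

(* Main.v *)
Require Import Defs.
From Stdlib Require Import Reals List Lra.
Open Scope R_scope.

Lemma DX_topology {X : Type} (Phi : (X -> R) -> Prop) : is_topology (DX_open Phi).
Proof.
  split; [|split; [|split]].
  - intros A B HAB HA x Bx. destruct (HA x (proj2 (HAB x) Bx)) as [e [He H]].
    exists e; split; auto. intros x' Hx'. apply HAB; auto.
  - intros x _; exists 1; split; [lra|auto].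
  - intros A B HA HB x [Ax Bx].
    destruct (HA x Ax) as [e1 [He1 H1]]. destruct (HB x Bx) as [e2 [He2 H2]].
    exists (Rmin e1 e2); split; [apply Rmin_pos; auto|].
    intros x' [d [Hd Hb]]; split.
    + apply H1; exists d; split; auto. pose proof (Rmin_l e1 e2); lra.
    + apply H2; exists d; split; auto. pose proof (Rmin_r e1 e2); lra.
  - intros S HS x [A [SA Ax]].
    destruct (HS A SA x Ax) as [e [He H]]. exists e; split; auto.
    intros x' Hx'; exists A; split; auto.
Qed.

Lemma DX_preim {X : Type} (Phi : (X -> R) -> Prop) phi V :
  Phi phi -> R_open V -> DX_open Phi (fun x => V (phi x)).
Proof.
  intros Hp HV x Vx. destruct (HV _ Vx) as [e [He H]].
  exists e; split; auto. intros x' [d [Hd Hb]]. apply H.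
  specialize (Hb phi Hp). rewrite Rabs_minus_sym in Hb. lra.
Qed.

Lemma ball_open (c r : R) : R_open (fun z => Rabs (z - c) < r).
Proof.
  intros y Hy. exists (r - Rabs (y - c)); split; [lra|].
  intros z Hz. pose proof (Rabs_triang (z - y) (y - c)).
  replace (z - y + (y - c)) with (z - c) in H by ring. lra.
Qed.

Lemma W_open {X : Type} (Phi : (X -> R) -> Prop) (T : (X -> Prop) -> Prop)
  (HT : is_topology T)
  (Hpre : forall phi V, Phi phi -> R_open V -> T (fun x => V (phi x)))
  (x : X) (r : R) (l : list (X -> R)) :
  (forall psi, In psi l -> Phi psi) ->
  T (fun y => forall psi, In psi l -> Rabs (psi y - psi x) < r).
Proof.
  destruct HT as [Hext [HTT [HI HU]]].
  induction l as [|p l IH]; intros Hl.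
  - eapply Hext; [|exact HTT]. intros y; split; auto. intros _ psi [].
  - eapply Hext; [|apply HI; [apply (Hpre p (fun z => Rabs (z - p x) < r)); [apply Hl; left; auto| apply ball_open] | apply IH; intros; apply Hl; right; auto]].
    intros y; simpl; split.
    + intros [H1 H2] psi [<-|Hi]; auto.
    + intros H; split; auto.
Qed.

Lemma max_bound {X : Type} (l : list (X -> R)) (x x' : X) (r : R) :
  0 < r -> (forall psi, In psi l -> Rabs (psi x' - psi x) < r) ->
  exists m, m < r /\ forall psi, In psi l -> Rabs (psi x - psi x') <= m.
Proof.
  intros Hr; induction l as [|p l IH]; intros H.
  - exists 0; split; auto. intros _ [].
  - destruct IH as [m [Hm Hb]]. intros; apply H; right; auto.
    exists (Rmax m (Rabs (p x - p x'))); split.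
    + apply Rmax_lub_lt; auto. rewrite Rabs_minus_sym; apply H; left; auto.
    + intros psi [<-|Hi]. apply Rmax_r. eapply Rle_trans; [apply Hb; auto|apply Rmax_l].
Qed.

Theorem mainTheorem1 (X : Type) (Phi : (X -> R) -> Prop)
  (hX : exists x : X, True)
  (hPhi : exists phi, Phi phi)
  (hbdd : forall phi, Phi phi -> bounded_fun phi) :
  (forall U : X -> Prop, init_open Phi U -> DX_open Phi U) /\
  (totally_bounded_DPhi Phi ->
     forall U : X -> Prop, DX_open Phi U <-> init_open Phi U).
Proof.
  assert (P1 : forall U : X -> Prop, init_open Phi U -> DX_open Phi U).
  { intros U HU. apply HU. apply DX_topology. intros; apply DX_preim; auto. }
  split; auto. intros Htb U; split; [|apply P1].
  intros HU T HT Hpre.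
  pose proof HT as [Hext [HTT [HI HUn]]].
  eapply Hext; [|apply (HUn (fun A => T A /\ forall y, A y -> U y)); intros A [HA _]; exact HA].
  intros x; split.
  - intros [A [[_ HA] Ax]]; auto.
  - intros Ux. destruct (HU x Ux) as [e [He Hb]].
    destruct (Htb (e/3)) as [l [Hl Hnet]]; [lra|].
    exists (fun y => forall psi, In psi l -> Rabs (psi y - psi x) < e/3).
    split; [split|].
    + apply W_open with Phi; auto.
    + intros y Hy. apply Hb.
      destruct (max_bound l x y (e/3)) as [m [Hm Hmb]]; [lra|auto|].
      exists (2*(e/3) + m); split; [lra|].
      intros phi Hp. destruct (Hnet phi Hp) as [psi [Hin [d [Hd Hdd]]]].
      pose proof (Hdd x) as A1. pose proof (Hdd y) as A2. pose proof (Hmb psi Hin) as A3.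
      pose proof (Rabs_triang (phi x - psi x) (psi x - psi y)).
      pose proof (Rabs_triang (phi x - psi x + (psi x - psi y)) (psi y - phi y)).
      rewrite (Rabs_minus_sym (psi y)) in H0.
      replace (phi x - psi x + (psi x - psi y) + (psi y - phi y)) with (phi x - phi y) in H0 by ring.
      lra.
    + intros psi _. unfold Rminus; rewrite Rplus_opp_r, Rabs_R0; lra.
Qed.
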